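(* The following two statements are equivalent: (a) every nearly finitary matroid is $k$-nearly finitary for some $k\in\mathbb{N}$; (b) for every matroid $M$ that is not $k$-nearly finitary for any $k\in\mathbb{N}$, the near finitarization $M^{\mathrm{nfin}}$ is not a matroid.
   Context: Matroids (possibly infinite) $(E,\mathcal{L})$: $\emptyset\in\mathcal{L}$; subsets of independent sets independent; if $B$ is maximal and $A$ non-maximal in $\mathcal{L}$, then $A\cup\{b\}\in\mathcal{L}$ for some $b\in B\setminus A$; for $A\in\mathcal{L}$, $A\subseteq X\subseteq E$, $\{S\in\mathcal{L}:A\subseteq S\subseteq X\}$ has a maximal element. Bases are maximal independent sets. The finitarization $M^{\mathrm{fin}}=(E,\mathcal{L}^{\mathrm{fin}})$: sets all of whose finite subsets lie in $\mathcal{L}$. The near finitarization $M^{\mathrm{nfin}}=(E,\mathcal{L}^{\mathrm{nfin}})$ with $\mathcal{L}^{\mathrm{nfin}}=\{F\in\mathcal{L}^{\mathrm{fin}}:\exists S\in\mathcal{L},\ S\subseteq F,\ |F\setminus S|<\infty\}$. $M$ is nearly finitary if $F\setminus B$ is finite whenever a base $F$ of $M^{\mathrm{fin}}$ contains a base $B$ of $M$; $k$-nearly finitary if $|F\setminus B|\le k$ for all such pairs. *)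

(* Defs.v *)
From Stdlib Require Import List.

Definition subset {E : Type} (A B : E -> Prop) : Prop := forall x, A x -> B x.

Definition finite_set {E : Type} (A : E -> Prop) : Prop :=
  exists l : list E, forall x, A x -> In x l.

Definition card_le {E : Type} (A : E -> Prop) (k : nat) : Prop :=
  exists l : list E, length l <= k /\ forall x, A x -> In x l.

Definition setD {E : Type} (A B : E -> Prop) : E -> Prop := fun x => A x /\ ~ B x.

Definition maximal_in {E : Type} (F : (E -> Prop) -> Prop) (S : E -> Prop) : Prop :=
  F S /\ forall T, F T -> subset S T -> subset T S.

(* Matroid axioms (I1)-(I3) and (IM) on ground set E (the whole type). *)
Definition is_matroid {E : Type} (L : (E -> Prop) -> Prop) : Prop :=
  L (fun _ => False) /\
  (forall A B, L B -> subset A B -> L A) /\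
  (forall A B, maximal_in L B -> L A -> ~ maximal_in L A ->
     exists b, B b /\ ~ A b /\ L (fun x => A x \/ x = b)) /\
  (forall A X, L A -> subset A X ->
     exists S, maximal_in (fun S => L S /\ subset A S /\ subset S X) S).

Definition is_base {E : Type} (L : (E -> Prop) -> Prop) (B : E -> Prop) : Prop :=
  maximal_in L B.

Definition Lfin {E : Type} (L : (E -> Prop) -> Prop) (F : E -> Prop) : Prop :=
  forall G, subset G F -> finite_set G -> L G.

Definition Lnfin {E : Type} (L : (E -> Prop) -> Prop) (F : E -> Prop) : Prop :=
  Lfin L F /\ exists S, L S /\ subset S F /\ finite_set (setD F S).

Definition nearly_finitary {E : Type} (L : (E -> Prop) -> Prop) : Prop :=
  forall F B, is_base (Lfin L) F -> is_base L B -> subset B F ->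
    finite_set (setD F B).

Definition k_nearly_finitary {E : Type} (k : nat) (L : (E -> Prop) -> Prop) : Prop :=
  forall F B, is_base (Lfin L) F -> is_base L B -> subset B F ->
    card_le (setD F B) k.

(* Main.v *)
Require Import Defs.
From Stdlib Require Import List Classical Lia.
From mathcomp Require classical_sets.

Definition add {E : Type} (A : E -> Prop) (b : E) : E -> Prop := fun x => A x \/ x = b.
Definition restr {E : Type} (L : (E -> Prop) -> Prop) (X : E -> Prop) : (E -> Prop) -> Prop :=
  fun S => L S /\ subset S X.

Lemma card_le_mono {E : Type} (A B : E -> Prop) n : subset A B -> card_le B n -> card_le A n.
Proof. intros H [l [Hl Hl']]. exists l. split; [exact Hl|]. intros x Hx; apply Hl', H, Hx. Qed.

Lemma card_le_remove {E : Type} (Sx A : E -> Prop) b n :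
  card_le Sx n -> Sx b -> (forall z, A z -> Sx z /\ z <> b) ->
  exists n', n = S n' /\ card_le A n'.
Proof.
  intros [l [Hl Hl']] Hb HA.
  destruct (in_split b l (Hl' b Hb)) as [l1 [l2 Heq]]. subst l.
  rewrite length_app in Hl. simpl in Hl.
  destruct n as [|n']; [lia|]. exists n'. split; [reflexivity|].
  exists (l1 ++ l2). split. rewrite length_app; lia.
  intros z Hz. destruct (HA z Hz) as [Hz1 Hz2]. specialize (Hl' z Hz1).
  apply in_app_iff in Hl'. apply in_app_iff. destruct Hl' as [H|[H|H]]; auto.
  congruence.
Qed.

Lemma count_step {E : Type} (P : (E -> Prop) -> Prop) :
  (forall A B, P B -> subset A B -> P A) ->
  (forall A B, maximal_in P B -> P A -> ~ maximal_in P A -> exists b, B b /\ ~ A b /\ P (add A b)) ->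
  forall A B a, maximal_in P A -> maximal_in P B -> A a -> ~ B a ->
  exists b, B b /\ ~ A b /\ maximal_in P (add (fun x => A x /\ x <> a) b).
Proof.
  intros Pd PI3 A B a HA HB Ha Hna.
  assert (HPr : P (fun x => A x /\ x <> a)) by (apply Pd with A; [exact (proj1 HA)| intros y [Hy _]; exact Hy]).
  assert (Hnm : ~ maximal_in P (fun x => A x /\ x <> a)).
  { intros [_ Hm]. assert (H : (fun x => A x /\ x <> a) a).
    { apply (Hm A (proj1 HA)). intros y [Hy _]; exact Hy. exact Ha. }
    destruct H as [_ H]; exact (H eq_refl). }
  destruct (PI3 _ B HB HPr Hnm) as [b [Hb [Hnb HPb]]].
  assert (Hba : b <> a) by (intro; subst; contradiction).
  assert (HnAb : ~ A b) by (intro H; apply Hnb; split; assumption).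
  exists b. split; [exact Hb|]. split; [exact HnAb|].
  destruct (classic (maximal_in P (add (fun x => A x /\ x <> a) b))) as [Hm|Hm]; [exact Hm|].
  exfalso. destruct (PI3 _ A HA HPb Hm) as [c [Hc [Hnc HPc]]].
  assert (Hca : c = a).
  { apply NNPP; intro H. apply Hnc. left. split; assumption. }
  subst c. apply HnAb. apply (proj2 HA (add A b)).
  - apply Pd with (add (add (fun x => A x /\ x <> a) b) a); [exact HPc|].
    intros y [Hy|Hy].
    + destruct (classic (y = a)) as [->|Hya]; [right; reflexivity| left; left; split; assumption].
    + left; right; exact Hy.
  - intros y Hy; left; exact Hy.
  - right; reflexivity.
Qed.

Lemma count {E : Type} (P : (E -> Prop) -> Prop) :
  (forall A B, P B -> subset A B -> P A) ->
  (forall A B, maximal_in P B -> P A -> ~ maximal_in P A -> exists b, B b /\ ~ A b /\ P (add A b)) ->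
  forall n A B, maximal_in P A -> maximal_in P B -> card_le (setD B A) n -> card_le (setD A B) n.
Proof.
  intros Pd PI3 n. induction n as [|n IH]; intros A B HA HB Hc;
  (destruct (classic (exists a, A a /\ ~ B a)) as [[a [Ha Hna]]|Hno];
   [| exists nil; split; [simpl; lia| intros x [H1 H2]; exfalso; apply Hno; eauto]]);
  destruct (count_step P Pd PI3 A B a HA HB Ha Hna) as [b [Hb [HnAb HM]]];
  (destruct (card_le_remove (setD B A) (setD B (add (fun x => A x /\ x <> a) b)) b _ Hc)
    as [n' [Heq Hc']];
    [split; assumption
    | intros z [HzB HzA]; split;
      [split; [exact HzB| intro HAz; apply HzA; left; split; [exact HAz| intro; subst; contradiction]]
      | intro; subst; apply HzA; right; reflexivity] |]).
  - discriminate.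
  - injection Heq as Heq; subst n'.
    destruct (IH _ B HM HB Hc') as [l [Hl Hl']].
    exists (a :: l). split; [simpl; lia|].
    intros x [HxA HxB]. destruct (classic (x = a)) as [->|Hxa]; [left; reflexivity|].
    right. apply Hl'. split; [left; split; assumption| exact HxB].
Qed.

Lemma IM_restrict {E : Type} (L : (E -> Prop) -> Prop) A X :
  is_matroid L -> L A -> subset A X -> exists K, maximal_in (restr L X) K /\ subset A K.
Proof.
  intros [H1 [H2 [H3 H4]]] HA HAX.
  destruct (H4 A X HA HAX) as [S [[HS [HAS HSX]] Hm]].
  exists S. split; [|exact HAS]. split; [split; assumption|].
  intros T [HT HTX] HST. apply Hm; [|exact HST]. split; [exact HT|]. split; [|exact HTX].
  intros y Hy; apply HST, HAS, Hy.
Qed.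

Lemma base_of_full {E : Type} (L : (E -> Prop) -> Prop) K :
  maximal_in (restr L (fun _ => True)) K -> maximal_in L K.
Proof.
  intros [[HK _] Hm]. split; [exact HK|]. intros T HT HKT. apply Hm; [split; [exact HT| intros ? ?; exact I]| exact HKT].
Qed.

Lemma restr_I3 {E : Type} (L : (E -> Prop) -> Prop) (X : E -> Prop) : is_matroid L ->
  forall A B, maximal_in (restr L X) B -> restr L X A -> ~ maximal_in (restr L X) A ->
  exists b, B b /\ ~ A b /\ restr L X (add A b).
Proof.
  intros HL A B HB HA HnA. pose proof HL as [H1 [H2 [H3 H4]]].
  assert (exists x, X x /\ ~ A x /\ L (add A x)) as [x [HxX [HxA HLx]]].
  { apply NNPP; intro Hno. apply HnA. split; [exact HA|].
    intros T [HT HTX] HAT z Hz. apply NNPP; intro Hz'. apply Hno. exists z.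
    split; [apply HTX; exact Hz|]. split; [exact Hz'|].
    apply H2 with T; [exact HT|]. intros y [Hy|Hy]; [apply HAT; exact Hy| subst; exact Hz]. }
  enough (Hs : exists b, B b /\ ~ A b /\ L (add A b)).
  { destruct Hs as [b [Hb [Hnb HLb]]]. exists b. split; [exact Hb|]. split; [exact Hnb|]. split; [exact HLb|].
    intros y [Hy|Hy]; [apply (proj2 HA); exact Hy| subst; apply (proj2 (proj1 HB)); exact Hb]. }
  destruct (IM_restrict L B (fun _ => True) HL (proj1 (proj1 HB)) (fun _ _ => I)) as [Bs [HBs HBBs]].
  apply base_of_full in HBs.
  assert (HBsX : forall z, Bs z -> X z -> B z).
  { intros z Hz HzX. apply (proj2 HB (fun z => Bs z /\ X z)).
    - split. apply H2 with Bs. exact (proj1 HBs). intros y [Hy _]; exact Hy. intros y [_ Hy]; exact Hy.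
    - intros y Hy. split. apply HBBs; exact Hy. apply (proj2 (proj1 HB)); exact Hy.
    - split; assumption. }
  pose (Z := fun z => Bs z /\ ~ X z).
  destruct (IM_restrict L (add A x) (fun z => add A x z \/ Z z) HL HLx (fun z Hz => or_introl Hz)) as [K [HK HAK]].
  destruct (classic (maximal_in L K)) as [HKm|HKn].
  2:{ destruct (H3 K Bs HBs (proj1 (proj1 HK)) HKn) as [c [Hc [HnKc HLc]]].
    destruct (classic (X c)) as [HcX|HcX].
    - exists c. split. apply HBsX; assumption. split.
      + intro HAc; apply HnKc; apply HAK; left; exact HAc.
      + apply H2 with (add K c); [exact HLc|]. intros y [Hy|Hy]; [left; apply HAK; left; exact Hy| right; exact Hy].
    - exfalso. apply HnKc. apply (proj2 HK (add K c)).
      + split; [exact HLc|]. intros y [Hy|Hy]. apply (proj2 (proj1 HK)); exact Hy. subst; right; split; assumption.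
      + intros y Hy; left; exact Hy.
      + right; reflexivity. }
  pose (T := fun z => B z \/ (K z /\ Z z)).
  assert (HLT: L T).
  { apply H2 with Bs; [exact (proj1 HBs)|]. intros y [Hy|[_ [Hy _]]]; [apply HBBs; exact Hy| exact Hy]. }
  destruct (classic (maximal_in L T)) as [HTm|HTn].
  2:{ exfalso. destruct (H3 T K HKm HLT HTn) as [c [Hc [HnTc HLc]]].
    assert (HcX: X c /\ ~ B c).
    { split; [|intro; apply HnTc; left; assumption].
      destruct (proj2 (proj1 HK) c Hc) as [[H|H]|H].
      - apply (proj2 HA); exact H.
      - subst; exact HxX.
      - exfalso; apply HnTc; right; split; assumption. }
    apply (proj2 HcX). apply (proj2 HB (add B c)).
    - split. apply H2 with (add T c); [exact HLc|]. intros y [Hy|Hy]; [left; left; exact Hy|right; exact Hy].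
      intros y [Hy|Hy]; [apply (proj2 (proj1 HB)); exact Hy| subst; exact (proj1 HcX)].
    - intros y Hy; left; exact Hy.
    - right; reflexivity. }
  pose (A0 := fun z => A z \/ (K z /\ Z z)).
  assert (HA0K: subset A0 K).
  { intros y [Hy|[Hy _]]; [apply HAK; left; exact Hy| exact Hy]. }
  assert (HLA0: L A0) by (apply H2 with K; [exact (proj1 HKm)|exact HA0K]).
  assert (HnA0: ~ maximal_in L A0).
  { intros [_ Hm]. assert (HxA0: A0 x).
    { apply (Hm (add A0 x)).
      - apply H2 with K. exact (proj1 HKm). intros y [Hy|Hy]; [apply HA0K; exact Hy| subst; apply HAK; right; reflexivity].
      - intros y Hy; left; exact Hy.
      - right; reflexivity. }
    destruct HxA0 as [Hx|[_ [_ Hx]]]; contradiction. }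
  destruct (H3 A0 T HTm HLA0 HnA0) as [c [Hc [HnA0c HLc]]].
  destruct Hc as [Hc|[HcK HcZ]].
  2:{ exfalso; apply HnA0c; right; split; assumption. }
  exists c. split; [exact Hc|]. split.
  - intro; apply HnA0c; left; assumption.
  - apply H2 with (add A0 c); [exact HLc|]. intros y [Hy|Hy]; [left; left; exact Hy|right; exact Hy].
Qed.

Lemma core {E : Type} (L : (E -> Prop) -> Prop) : is_matroid L ->
  forall (W : E -> Prop) x A0 K, ~ W x -> maximal_in (restr L W) A0 -> maximal_in (restr L W) K ->
  L (add A0 x) -> ~ L (add K x) -> finite_set (setD K A0) -> False.
Proof.
  intros HL W x A0 K HWx HA0 HK HLA0x HnKx [l Hl].
  pose proof HL as [H1 [H2 [H3 H4]]].
  assert (Hd: forall X A B, restr L X B -> subset A B -> restr L X A).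
  { intros X A B [HB HBX] HAB. split. apply H2 with B; assumption. intros y Hy; apply HBX, HAB, Hy. }
  pose (W' := add W x).
  assert (HA1 : maximal_in (restr L W') (add A0 x)).
  { split. split; [exact HLA0x|]. intros y [Hy|Hy]; [left; apply (proj2 (proj1 HA0)); exact Hy| right; exact Hy].
    intros T [HT HTW] HAT z Hz. apply NNPP; intro Hnz. destruct (HTW z Hz) as [HzW|Hzx].
    2: apply Hnz; right; exact Hzx.
    apply Hnz; left. apply (proj2 HA0 (add A0 z)).
    - split. apply H2 with T; [exact HT|]. intros y [Hy|Hy]; [apply HAT; left; exact Hy| subst; exact Hz].
      intros y [Hy|Hy]; [apply (proj2 (proj1 HA0)); exact Hy | subst; exact HzW].
    - intros y Hy; left; exact Hy.
    - right; reflexivity. }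
  assert (HK' : maximal_in (restr L W') K).
  { split. split; [exact (proj1 (proj1 HK))|]. intros y Hy; left; apply (proj2 (proj1 HK)); exact Hy.
    intros T [HT HTW] HKT z Hz. apply NNPP; intro Hnz. destruct (HTW z Hz) as [HzW|Hzx].
    - apply Hnz. apply (proj2 HK (add K z)).
      + split. apply H2 with T; [exact HT|]. intros y [Hy|Hy]; [apply HKT; exact Hy|subst; exact Hz].
        intros y [Hy|Hy]; [apply (proj2 (proj1 HK)); exact Hy| subst; exact HzW].
      + intros y Hy; left; exact Hy.
      + right; reflexivity.
    - subst z. apply HnKx. apply H2 with T; [exact HT|]. intros y [Hy|Hy]; [apply HKT; exact Hy| subst; exact Hz]. }
  assert (HxK : ~ K x).
  { intro Hx. apply HnKx. apply H2 with K. exact (proj1 (proj1 HK)). intros y [Hy|Hy]; [exact Hy|subst; exact Hx]. }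
  assert (Hcount: forall m, card_le (setD K A0) m -> False).
  { intros m; induction m as [|m IH]; intro Hc;
    (assert (Hsub : subset (setD K (add A0 x)) (setD K A0))
      by (intros y [Hy Hn]; split; [exact Hy| intro; apply Hn; left; assumption]));
    pose proof (count (restr L W') (Hd W') (restr_I3 L W' HL) _ (add A0 x) K HA1 HK'
                  (card_le_mono _ _ _ Hsub Hc)) as Hc1;
    (destruct (card_le_remove _ (setD A0 K) x _ Hc1) as [n' [Heq Hc2]];
     [split; [right; reflexivity| exact HxK]
     | intros z [Hz Hn]; split; [split; [left; exact Hz| exact Hn]| intro; subst; apply HWx; apply (proj2 (proj1 HA0)); exact Hz]
     |]).
    - discriminate.
    - injection Heq as Heq; subst n'.
      apply IH. exact (count (restr L W) (Hd W) (restr_I3 L W HL) _ K A0 HK HA0 Hc2). }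
  exact (Hcount (length l) (ex_intro _ l (conj (le_n _) Hl))).
Qed.

Lemma Lfin_I3 {E : Type} (L : (E -> Prop) -> Prop) : is_matroid L ->
  forall A B, maximal_in (Lfin L) B -> Lfin L A -> ~ maximal_in (Lfin L) A ->
  exists b, B b /\ ~ A b /\ Lfin L (add A b).
Proof.
  intros HL A B HB HA HnA. pose proof HL as [H1 [H2 [H3 H4]]].
  assert (exists x, ~ A x /\ Lfin L (add A x)) as [x [HxA HLx]].
  { apply NNPP; intro Hno. apply HnA. split; [exact HA|].
    intros T HT HAT z Hz. apply NNPP; intro Hz'. apply Hno. exists z.
    split; [exact Hz'|]. intros G HG HGf. apply HT; [|exact HGf].
    intros y Hy. destruct (HG y Hy) as [H|H]; [apply HAT; exact H| subst; exact Hz]. }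
  apply NNPP; intro Hno.
  assert (Hb: forall b, B b -> ~ A b -> ~ Lfin L (add A b))
    by (intros b Hb HAb HLb; apply Hno; exists b; auto).
  assert (HBx: ~ B x) by (intro H; exact (Hb x H HxA HLx)).
  assert (HnBx: ~ Lfin L (add B x)).
  { intro H. apply HBx. apply (proj2 HB (add B x) H). intros y Hy; left; exact Hy. right; reflexivity. }
  assert (Hex : forall F, ~ Lfin L F -> exists G, subset G F /\ finite_set G /\ ~ L G).
  { intros F HF. apply NNPP; intro H. apply HF. intros G HG HGf. apply NNPP; intro HnG. apply H; eauto. }
  destruct (Hex _ HnBx) as [G [HGB [[lD HlD] HnG]]].
  assert (Hcoll: forall l : list E, exists lG, forall b, In b l -> B b -> ~ A b ->
             forall T, subset (add (fun z => A z /\ In z lG) b) T -> ~ L T).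
  { induction l as [|a l IH].
    - exists nil; intros b [].
    - destruct IH as [lG HlG]. destruct (classic (B a /\ ~ A a)) as [[Ha HnAa]|Hna].
      + destruct (Hex _ (Hb a Ha HnAa)) as [C [HC [[lC HlC] HnC]]].
        exists (lC ++ lG). intros b Hbin Hb' HnAb T HT HLT. destruct Hbin as [Heq|Hin].
        * subst b. apply HnC. apply H2 with T; [exact HLT|]. intros y Hy. apply HT.
          destruct (HC y Hy) as [HyA|Hya].
          -- left. split; [exact HyA| apply in_or_app; left; apply HlC; exact Hy].
          -- right; exact Hya.
        * apply (HlG b Hin Hb' HnAb T); [|exact HLT].
          intros y [[HyA Hyin]|Hy]; apply HT; [left; split; [exact HyA| apply in_or_app; right; exact Hyin] | right; exact Hy].
      + exists lG. intros b [Heq|Hin] Hb' HnAb.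
        * subst; exfalso; apply Hna; split; assumption.
        * apply HlG; assumption. }
  destruct (Hcoll lD) as [lG HlG].
  pose (W := fun z => (A z /\ In z lG) \/ (G z /\ z <> x)).
  pose (A0 := fun z => W z /\ A z).
  pose (Gx := fun z => G z /\ z <> x).
  assert (HWfin: forall z, W z -> In z (lG ++ lD)).
  { intros z [[_ Hz]|[Hz _]]; apply in_or_app; [left; exact Hz | right; apply HlD; exact Hz]. }
  assert (HLGx: L Gx).
  { apply (proj1 HB).
    - intros y [Hy Hyx]. destruct (HGB y Hy) as [H|H]; [exact H| contradiction].
    - exists lD. intros y [Hy _]. apply HlD; exact Hy. }
  destruct (IM_restrict L Gx W HL HLGx (fun z Hz => or_intror Hz)) as [K [HK HGxK]].
  assert (HWx : ~ W x).
  { intros [[HAx _]|[_ Hxx]]; [exact (HxA HAx)| exact (Hxx eq_refl)]. }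
  assert (HA0: maximal_in (restr L W) A0).
  { split.
    - split.
      + apply HA. intros y [_ Hy]; exact Hy. exists (lG ++ lD). intros y [Hy _]; apply HWfin; exact Hy.
      + intros y [Hy _]; exact Hy.
    - intros T [HT HTW] HA0T z Hz. apply NNPP; intro Hnz.
      destruct (HTW z Hz) as [[HzA Hzin]|[HzG Hzx]].
      + apply Hnz. split; [left; split; assumption| exact HzA].
      + assert (HzB: B z) by (destruct (HGB z HzG) as [H|H]; [exact H| contradiction]).
        assert (HnAz : ~ A z).
        { intro HzA. apply Hnz. split; [right; split; assumption| exact HzA]. }
        apply (HlG z (HlD z HzG) HzB HnAz T); [|exact HT].
        intros y [[HyA Hyin]|Hy].
        * apply HA0T. split; [left; split; assumption| exact HyA].
        * subst; exact Hz. }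
  assert (HLA0x : L (add A0 x)).
  { apply HLx.
    - intros y [[_ Hy]|Hy]; [left; exact Hy| right; exact Hy].
    - exists (x :: lG ++ lD). intros y [Hy|Hy]; [right; apply HWfin; exact (proj1 Hy)| left; symmetry; exact Hy]. }
  assert (HnKx: ~ L (add K x)).
  { intro H. apply HnG. apply H2 with (add K x); [exact H|]. intros y Hy.
    destruct (classic (y = x)) as [->|Hyx]; [right; reflexivity| left; apply HGxK; split; assumption]. }
  apply (core L HL W x A0 K HWx HA0 HK HLA0x HnKx).
  exists (lG ++ lD). intros y [Hy _]. apply HWfin. apply (proj2 (proj1 HK)); exact Hy.
Qed.

Lemma chain_lemma {E : Type} (A G : E -> Prop) (F : (E -> Prop) -> Prop) :
  (forall S T, F S -> F T -> subset S T \/ subset T S) ->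
  forall l : list E, (forall z, In z l -> G z -> A z \/ exists2 S, F S & S z) ->
  (forall z, In z l -> G z -> A z) \/ exists S, F S /\ forall z, In z l -> G z -> A z \/ S z.
Proof.
  intros Htot l. induction l as [|a l IH]; intros H.
  - left; intros z [].
  - assert (IH' := IH (fun z Hz => H z (or_intror Hz))).
    destruct (classic (G a)) as [Ga|nGa].
    + destruct (H a (or_introl eq_refl) Ga) as [Aa|[Sa HSa Saa]];
      destruct IH' as [IH'|[S [HS HSl]]].
      * left. intros z [<-|Hz] Gz; [exact Aa| exact (IH' z Hz Gz)].
      * right. exists S. split; [exact HS|]. intros z [<-|Hz] Gz; [left; exact Aa| exact (HSl z Hz Gz)].
      * right. exists Sa. split; [exact HSa|]. intros z [<-|Hz] Gz; [right; exact Saa| left; exact (IH' z Hz Gz)].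
      * destruct (Htot S Sa HS HSa) as [Hsub|Hsub].
        -- right; exists Sa; split; [exact HSa|]. intros z [<-|Hz] Gz; [right; exact Saa|].
           destruct (HSl z Hz Gz) as [H'|H']; [left; exact H'| right; apply Hsub; exact H'].
        -- right; exists S; split; [exact HS|]. intros z [<-|Hz] Gz; [right; apply Hsub; exact Saa | exact (HSl z Hz Gz)].
    + destruct IH' as [IH'|[S [HS HSl]]].
      * left. intros z [<-|Hz] Gz; [contradiction| exact (IH' z Hz Gz)].
      * right. exists S. split; [exact HS|]. intros z [<-|Hz] Gz; [contradiction| exact (HSl z Hz Gz)].
Qed.

Lemma Lfin_IM {E : Type} (L : (E -> Prop) -> Prop) : is_matroid L ->
  forall A X, Lfin L A -> subset A X ->
  exists S, maximal_in (fun S => Lfin L S /\ subset A S /\ subset S X) S.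
Proof.
  intros HL A X HA HAX. pose proof HL as [H1 [H2 _]].
  pose (P := fun S : E -> Prop => Lfin L (fun z => A z \/ S z) /\ subset S X).
  destruct (@classical_sets.Zorn_bigcup E P) as [S0 [[HS0 HS0X] HS0m]].
  - intros F HFP Htot. split.
    + intros G HG [l Hl].
      destruct (chain_lemma A G F Htot l) as [Hc|[S [HS HSl]]].
      * intros z _ Gz. exact (HG z Gz).
      * apply HA; [|exists l; exact Hl]. intros z Gz. exact (Hc z (Hl z Gz) Gz).
      * apply (proj1 (HFP S HS)); [|exists l; exact Hl]. intros z Gz. exact (HSl z (Hl z Gz) Gz).
    + intros z [S HS Hz]. apply (proj2 (HFP S HS)); exact Hz.
  - exists (fun z => A z \/ S0 z). split.
    + split; [exact HS0|]. split.
      * intros y Hy; left; exact Hy.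
      * intros y [Hy|Hy]; [apply HAX; exact Hy| apply HS0X; exact Hy].
    + intros T [HT [HAT HTX]] HST z Hz. right. apply NNPP; intro Hnz. apply (HS0m T).
      * split. intros y Hy; apply HST; right; exact Hy. intro HTS. apply Hnz. apply HTS. exact Hz.
      * split; [|exact HTX]. intros G HG HGf. apply HT; [|exact HGf].
        intros y Hy; destruct (HG y Hy) as [H|H]; [apply HAT; exact H| exact H].
Qed.

Lemma finmax_base {E : Type} (L : (E -> Prop) -> Prop) : is_matroid L ->
  forall F B', maximal_in (Lfin L) F -> maximal_in (restr L F) B' -> maximal_in L B'.
Proof.
  intros HL F B' HF HB'. pose proof HL as [H1 [H2 [H3 H4]]].
  split; [exact (proj1 (proj1 HB'))|].
  intros T HT HBT y Hy. apply NNPP; intro Hny.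
  assert (HLy: L (add B' y))
    by (apply H2 with T; [exact HT|]; intros z [Hz|Hz]; [apply HBT; exact Hz| subst; exact Hy]).
  assert (HFy: ~ F y).
  { intro HFy. apply Hny. apply (proj2 HB' (add B' y)).
    - split; [exact HLy|]. intros z [Hz|Hz]; [apply (proj2 (proj1 HB')); exact Hz| subst; exact HFy].
    - intros z Hz; left; exact Hz.
    - right; reflexivity. }
  assert (HnFy: ~ Lfin L (add F y)).
  { intro H. apply HFy. apply (proj2 HF (add F y) H). intros z Hz; left; exact Hz. right; reflexivity. }
  assert (exists G, subset G (add F y) /\ finite_set G /\ ~ L G) as [G [HGF [[lG HlG] HnG]]].
  { apply NNPP; intro H. apply HnFy. intros G HG HGf. apply NNPP; intro HnG. apply H; eauto. }
  pose (G0 := fun z => G z /\ z <> y).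
  assert (HG0F: subset G0 F).
  { intros z [Hz Hzy]. destruct (HGF z Hz); [assumption|contradiction]. }
  assert (HLG0: L G0).
  { apply (proj1 HF). exact HG0F. exists lG. intros z [Hz _]; apply HlG; exact Hz. }
  pose (W := fun z => B' z \/ G0 z).
  destruct (IM_restrict L G0 W HL HLG0 (fun z Hz => or_intror Hz)) as [K [HK HG0K]].
  apply (core L HL W y B' K).
  - intros [H|[_ H]]; [exact (Hny H)| exact (H eq_refl)].
  - split.
    + split. exact (proj1 (proj1 HB')). intros z Hz; left; exact Hz.
    + intros T' [HT' HT'W] HBT' z Hz. apply (proj2 HB' T').
      * split; [exact HT'|]. intros u Hu.
        destruct (HT'W u Hu) as [H|H]; [apply (proj2 (proj1 HB')); exact H| apply HG0F; exact H].
      * exact HBT'.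
      * exact Hz.
  - exact HK.
  - exact HLy.
  - intro H. apply HnG. apply H2 with (add K y); [exact H|]. intros z Hz.
    destruct (classic (z = y)) as [->|Hzy]; [right; reflexivity| left; apply HG0K; split; assumption].
  - exists lG. intros z [Hz HnB]. destruct (proj2 (proj1 HK) z Hz) as [H|[H _]]; [contradiction| apply HlG; exact H].
Qed.

Lemma Kfin {E : Type} (L : (E -> Prop) -> Prop) : is_matroid L -> nearly_finitary L ->
  forall F, Lfin L F -> Lnfin L F.
Proof.
  intros HL HNF F HF. pose proof HL as [H1 [H2 [H3 H4]]].
  destruct (Lfin_IM L HL F (fun _ => True) HF (fun _ _ => I)) as [Fs HFs].
  assert (HFsm: maximal_in (Lfin L) Fs).
  { split. exact (proj1 (proj1 HFs)). intros T HT HFT. apply (proj2 HFs T); [|exact HFT].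
    split; [exact HT|]. split.
    - intros y Hy; apply HFT; apply (proj1 (proj2 (proj1 HFs))); exact Hy.
    - intros ? ?; exact I. }
  destruct (IM_restrict L (fun _ => False) Fs HL H1 (fun _ H => False_ind _ H)) as [B' [HB' _]].
  pose proof (finmax_base L HL Fs B' HFsm HB') as HB'm.
  destruct (HNF Fs B' HFsm HB'm (proj2 (proj1 HB'))) as [l Hl].
  split; [exact HF|]. exists (fun z => B' z /\ F z). split.
  - apply H2 with B'. exact (proj1 HB'm). intros z [Hz _]; exact Hz.
  - split.
    + intros z [_ Hz]; exact Hz.
    + exists l. intros z [HzF Hn]. apply Hl. split.
      * apply (proj1 (proj2 (proj1 HFs))); exact HzF.
      * intro HB; apply Hn; split; assumption.
Qed.

Lemma Lfin_matroid {E : Type} (L : (E -> Prop) -> Prop) : is_matroid L -> is_matroid (Lfin L).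
Proof.
  intros HL. pose proof HL as [H1 [H2 [H3 H4]]].
  split. { intros G HG _. apply H2 with (fun _ => False); [exact H1| exact HG]. }
  split. { intros A B HB HAB G HG HGf. apply HB; [intros y Hy; apply HAB; apply HG; exact Hy| exact HGf]. }
  split. { exact (Lfin_I3 L HL). }
  exact (Lfin_IM L HL).
Qed.

Lemma matroid_ext {E : Type} (P Q : (E -> Prop) -> Prop) :
  (forall S, P S <-> Q S) -> is_matroid P -> is_matroid Q.
Proof.
  intros Heq [H1 [H2 [H3 H4]]].
  assert (Hm: forall S, maximal_in P S <-> maximal_in Q S).
  { intros S; split; intros [HS Hm]; split.
    - apply Heq; exact HS.
    - intros T HT; apply Hm; apply Heq; exact HT.
    - apply Heq; exact HS.
    - intros T HT; apply Hm; apply Heq; exact HT. }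
  split. { apply Heq; exact H1. }
  split. { intros A B HB HAB. apply Heq. apply H2 with B; [apply Heq; exact HB| exact HAB]. }
  split.
  { intros A B HB HA HnA.
    destruct (H3 A B (proj2 (Hm B) HB) (proj2 (Heq A) HA) (fun H => HnA (proj1 (Hm A) H)))
      as [b [Hb [Hnb HP]]].
    exists b; split; [exact Hb|split; [exact Hnb| apply Heq; exact HP]]. }
  intros A X HA HAX. destruct (H4 A X (proj2 (Heq A) HA) HAX) as [S [[HS [HAS HSX]] Hmax]].
  exists S. split.
  - split; [apply Heq; exact HS| split; assumption].
  - intros T [HT [HAT HTX]] HST. apply Hmax; [split; [apply Heq; exact HT| split; assumption]| exact HST].
Qed.

Lemma claim1 {E : Type} (L : (E -> Prop) -> Prop) :
  is_matroid L -> nearly_finitary L -> is_matroid (Lnfin L).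
Proof.
  intros HL HNF. apply (matroid_ext (Lfin L)).
  - intros S; split; [apply Kfin; assumption| intros [H _]; exact H].
  - apply Lfin_matroid; exact HL.
Qed.

Lemma claim2 {E : Type} (L : (E -> Prop) -> Prop) :
  is_matroid L -> is_matroid (Lnfin L) -> nearly_finitary L.
Proof.
  intros HL HN F B HF HB HBF. pose proof HL as [H1 [H2 [H3 H4]]]. destruct HN as [N1 [N2 [N3 N4]]].
  destruct (N4 (fun _ => False) F N1 (fun _ H => False_ind _ H)) as [S [[HS [_ HSF]] HSm]].
  assert (HFS: subset F S).
  { intros z Hz. apply NNPP; intro Hnz. apply Hnz. apply (HSm (add S z)).
    - split.
      + destruct HS as [HSfin [S' [HS' [HS'S [l Hl]]]]]. split.
        * intros G HG HGf. apply (proj1 HF); [|exact HGf].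
          intros y Hy. destruct (HG y Hy) as [H|H]; [apply HSF; exact H| subst; exact Hz].
        * exists S'. split; [exact HS'|]. split.
          -- intros y Hy; left; apply HS'S; exact Hy.
          -- exists (z :: l). intros y [[Hy|Hy] Hn].
             ++ right; apply Hl; split; assumption.
             ++ left; symmetry; exact Hy.
      + split. intros y []. intros y [Hy|Hy]; [apply HSF; exact Hy| subst; exact Hz].
    - intros y Hy; left; exact Hy.
    - right; reflexivity. }
  assert (HNF: Lnfin L F) by (apply N2 with S; [exact HS| exact HFS]).
  destruct HNF as [_ [S' [HS' [HS'F [l1 Hl1]]]]].
  destruct (IM_restrict L S' (fun _ => True) HL HS' (fun _ _ => I)) as [B2 [HB2 HS'B2]].
  apply base_of_full in HB2.
  assert (Hc : card_le (setD B B2) (length l1)).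
  { exists l1; split; [apply le_n|]. intros y [HyB HnB2]. apply Hl1. split.
    - apply HBF; exact HyB.
    - intro; apply HnB2; apply HS'B2; assumption. }
  destruct (count L H2 H3 (length l1) B2 B HB2 HB Hc) as [l2 [_ Hl2]].
  exists (l1 ++ l2). intros y [HyF HnB]. apply in_or_app.
  destruct (classic (S' y)) as [HS'y|HnS'y].
  - right. apply Hl2. split; [apply HS'B2; exact HS'y| exact HnB].
  - left. apply Hl1. split; assumption.
Qed.

Theorem theorem4p1p2 :
  (forall (E : Type) (L : (E -> Prop) -> Prop),
      is_matroid L -> nearly_finitary L -> exists k : nat, k_nearly_finitary k L)
  <->
  (forall (E : Type) (L : (E -> Prop) -> Prop),
      is_matroid L -> (forall k : nat, ~ k_nearly_finitary k L) ->
      ~ is_matroid (Lnfin L)).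
Proof.
  split.
  - intros Ha E L HL Hk HN. destruct (Ha E L HL (claim2 L HL HN)) as [k Hk'].
    exact (Hk k Hk').
  - intros Hb E L HL HNF. apply NNPP; intro Hno. apply (Hb E L HL).
    + intros k Hk; apply Hno; exists k; exact Hk.
    + apply claim1; assumption.
Qed.
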